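(* Let $A=\{a_1,\dots,a_{3k}\}$ be an instance of 3-PARTITION with $a^2$ divisible by $7$, and let $G(A)$ be the bipartite network constructed from $A$ as described in the context. In any division of $G(A)$ with maximal bipartite modularity, none of the bicliques $K_1,\dots,K_k$ is divided (i.e., for each $t$, all vertices of $K_t$ lie in a single community).
   Context: An instance of 3-PARTITION is a set of $3k$ positive integers $A=\{a_1,\dots,a_{3k}\}$ such that $a=\sum_{i=1}^{3k}a_i=kb$ and $b/4<a_i<b/2$ for all $i$, for some integer $b$. The bipartite network $G(A)$ (vertices colored red/blue, every edge joining a red and a blue vertex) is built as follows. (1) Construct $k$ complete bipartite networks (bicliques) $K_1,\dots,K_k$, each with $a$ red and $a$ blue vertices. (2) For each $i=1,\dots,3k$ add a red vertex $x_i$ and a blue vertex $y_i$ (element vertices). (3) For each $i$, connect $x_i$ to $a_i$ blue vertices in each of the $k$ bicliques, in such a way that each blue vertex of every biclique is adjacent to exactly one red element vertex; similarly connect $y_i$ to $a_i$ red vertices in each biclique so that each red vertex of every biclique is adjacent to exactly one blue element vertex. (4) For each $i$, add the edge $x_iy_i$. (5) For each $i$, construct a star $X_i$ with one blue internal vertex and $a^2/7$ red leaves, and a star $Y_i$ with one red internal vertex and $a^2/7$ blue leaves. (6) For each $i$, connect $x_i$ to the internal vertex of $X_i$ and $y_i$ to the internal vertex of $Y_i$. A division of the vertex set is a partition into communities. With $m$ the number of edges, Barber's bipartite modularity is $Q_b(\mathcal{C})=\sum_{C\in\mathcal{C}}\left(\frac{m_C}{m}-\frac{R_CB_C}{m^2}\right)$,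 where $m_C$ is the number of edges inside $C$ and $R_C$ (resp. $B_C$) is the sum of degrees of red (resp. blue) vertices in $C$. A division with maximal bipartite modularity is one maximizing $Q_b$ over all divisions. *)

(* Defs.v *)
From HB Require Import structures.
From mathcomp Require Import all_boot all_order all_algebra.
Set Implicit Arguments. Unset Strict Implicit. Unset Printing Implicit Defensive.
Import Order.TTheory GRing.Theory Num.Theory.

(* 3-PARTITION instance: k, and the 3k integers a_i given as w : 'I_(3k) -> nat. *)
Definition three_partition (k : nat) (w : 'I_(3 * k) -> nat) : Prop :=
  exists b : nat, (\sum_(i < 3 * k) w i = k * b)%N /\
    forall i, (0 < w i)%N /\ (b < 4 * w i)%N /\ (2 * w i < b)%N.

Section Network.
Variable k : nat.
Variable w : 'I_(3 * k) -> nat.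

Definition tot : nat := \sum_(i < 3 * k) w i.
(* number of leaves of each star, a^2/7 *)
Definition nleaves : nat := (tot ^ 2) %/ 7.

(* Red vertices:  biclique red vertices (t, j) | element vertices x_i
                | internal vertices of the stars Y_i | leaves (i, l) of the stars X_i *)
Definition redV : finType :=
  ((('I_k * 'I_tot) + 'I_(3 * k)) + ('I_(3 * k) + ('I_(3 * k) * 'I_nleaves)))%type.
(* Blue vertices: biclique blue vertices (t, j) | element vertices y_i
                | internal vertices of the stars X_i | leaves (i, l) of the stars Y_i *)
Definition blueV : finType :=
  ((('I_k * 'I_tot) + 'I_(3 * k)) + ('I_(3 * k) + ('I_(3 * k) * 'I_nleaves)))%type.

Definition vertex : finType := (redV + blueV)%type.

(* f t j = the index i of the red element vertex x_i adjacent to blue vertex j of K_t;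
   g t j = the index i of the blue element vertex y_i adjacent to red vertex j of K_t. *)
Definition valid_assign (f : 'I_k -> 'I_tot -> 'I_(3 * k)) : Prop :=
  forall (t : 'I_k) (i : 'I_(3 * k)), #|[set j | f t j == i]| = w i.

Variables f g : 'I_k -> 'I_tot -> 'I_(3 * k).

Definition gedge (r : redV) (b : blueV) : bool :=
  match r, b with
  | inl (inl (t, _)), inl (inl (t', _)) => t == t'          (* biclique K_t *)
  | inl (inr i), inl (inl (t, j)) => f t j == i             (* x_i -- blue of K_t *)
  | inl (inl (t, j)), inl (inr i) => g t j == i             (* red of K_t -- y_i *)
  | inl (inr i), inl (inr i') => i == i'                    (* x_i -- y_i *)
  | inl (inr i), inr (inl i') => i == i'                    (* x_i -- centre of X_i *)
  | inr (inr (i, _)), inr (inl i') => i == i'               (* leaf of X_i -- centre *)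
  | inr (inl i), inl (inr i') => i == i'                    (* centre of Y_i -- y_i *)
  | inr (inl i), inr (inr (i', _)) => i == i'               (* centre of Y_i -- leaf *)
  | _, _ => false
  end.

Definition deg_red (r : redV) : nat := #|[set b | gedge r b]|.
Definition deg_blue (b : blueV) : nat := #|[set r | gedge r b]|.

Definition nedges : nat := \sum_(r : redV) \sum_(b : blueV) gedge r b.

Definition edges_in (C : {set vertex}) : nat :=
  \sum_(r : redV) \sum_(b : blueV) [&& inl r \in C, inr b \in C & gedge r b].
Definition red_deg_sum (C : {set vertex}) : nat := \sum_(r : redV | inl r \in C) deg_red r.
Definition blue_deg_sum (C : {set vertex}) : nat := \sum_(b : blueV | inr b \in C) deg_blue b.

Definition Qb (P : {set {set vertex}}) : rat :=
  \sum_(C in P) (((edges_in C)%:R / (nedges)%:R)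
                 - ((red_deg_sum C * blue_deg_sum C)%:R / (nedges ^ 2)%:R))%R.

Definition biclique (t : 'I_k) : {set vertex} :=
  [set v : vertex | match v with
                    | inl (inl (inl (t', _))) => t' == t
                    | inr (inl (inl (t', _))) => t' == t
                    | _ => false end].

End Network.

(* Main.v *)
Require Import Defs.
From HB Require Import structures.
From mathcomp Require Import all_boot all_order all_algebra.
From mathcomp Require Import ring lra zify.
Import Order.TTheory GRing.Theory Num.Theory.
Set Implicit Arguments. Unset Strict Implicit. Unset Printing Implicit Defensive.

Lemma card_setE (T : finType) (p : pred T) : #|[set x | p x]| = \sum_x (p x : nat).
Proof. by rewrite -sum1dep_card big_mkcond; apply: eq_bigr => x _; case: (p x). Qed.

Lemma sum_eq1l (T : finType) (x : T) : \sum_i ((x == i) : nat) = 1.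
Proof.
rewrite (bigD1 x) //= eqxx big1 // => i /negbTE; by rewrite eq_sym => ->.
Qed.

Lemma sum_pair (A B : finType) (G : A * B -> nat) :
  \sum_p G p = \sum_a \sum_b G (a, b).
Proof. by rewrite pair_bigA; apply: eq_bigr => [[a b]]. Qed.

Section Graph.
Variables (k : nat) (w : 'I_(3 * k) -> nat) (f g : 'I_k -> 'I_(tot w) -> 'I_(3 * k)).

Lemma deg_redK t j : deg_red f g (inl (inl (t, j))) = (tot w).+1.
Proof.
rewrite /deg_red card_setE big_sumType big_sumType /= sum_pair /=.
rewrite (bigD1 t) //= eqxx sum_nat_const card_ord muln1 big1; last first.
  by move=> t' /negbTE; rewrite eq_sym => ->; rewrite big1.
rewrite sum_eq1l big_sumType !big1 //=; lia.
Qed.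

Lemma deg_blueK t j : deg_blue f g (inl (inl (t, j))) = (tot w).+1.
Proof.
rewrite /deg_blue card_setE big_sumType big_sumType /= sum_pair /=.
rewrite (bigD1 t) //= eqxx sum_nat_const card_ord muln1 big1; last first.
  by move=> t' /negbTE ->; rewrite big1.
rewrite big_sumType /= sum_eq1l big1 // big1; first lia.
by move=> [].
Qed.

Lemma row_x i : valid_assign f ->
  \sum_b (gedge f g (inl (inr i)) b : nat) = k * w i + 2.
Proof.
move=> vf.
rewrite big_sumType big_sumType /= sum_pair /=.
rewrite (eq_bigr (fun _ => w i)); last by move=> t' _; rewrite -(vf t' i) card_setE.
rewrite sum_nat_const card_ord sum_eq1l big_sumType /= sum_eq1l big1 //=; lia.
Qed.

Lemma row_Y i : \sum_b (gedge f g (inr (inl i)) b : nat) = (nleaves w).+1.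
Proof.
rewrite big_sumType big_sumType /= sum_pair /= sum_eq1l big1; last by move=> *; rewrite big1.
rewrite big_sumType /= big1 // sum_pair /= (bigD1 i) //= eqxx sum_nat_const card_ord.
rewrite big1; first lia.
by move=> i' /negbTE; rewrite eq_sym => ->; rewrite big1.
Qed.

Lemma row_L p : \sum_b (gedge f g (inr (inr p)) b : nat) = 1.
Proof.
case: p => i l.
rewrite big_sumType big_sumType /= big1 // big1 // big_sumType /= sum_eq1l big1 //.
Qed.

Lemma row_K t j : \sum_b (gedge f g (inl (inl (t, j))) b : nat) = (tot w).+1.
Proof. by rewrite -(deg_redK t j) /deg_red card_setE. Qed.

Lemma nedgesE : valid_assign f ->
  nedges f g = k * (tot w * (tot w).+1) + (k * tot w + 2 * (3 * k))
               + 3 * k * (nleaves w).+1 + 3 * k * nleaves w.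
Proof.
move=> vf.
have h1 : \sum_(p : 'I_k * 'I_(tot w)) \sum_b (gedge f g (inl (inl p)) b : nat)
          = k * (tot w * (tot w).+1).
  rewrite sum_pair (eq_bigr (fun _ => tot w * (tot w).+1)) ?sum_nat_const ?card_ord //.
  by move=> t' _; rewrite (eq_bigr (fun _ => (tot w).+1)) ?sum_nat_const ?card_ord //
     => j _; rewrite row_K.
have h2 : \sum_i \sum_b (gedge f g (inl (inr i)) b : nat) = k * tot w + 2 * (3 * k).
  rewrite (eq_bigr (fun i => k * w i + 2)); last by move=> i _; rewrite row_x.
  by rewrite big_split /= -big_distrr /= sum_nat_const card_ord /tot [2 * _]mulnC.
have h3 : \sum_i \sum_b (gedge f g (inr (inl i)) b : nat) = 3 * k * (nleaves w).+1.
  rewrite (eq_bigr (fun _ => (nleaves w).+1)); last by move=> i _; rewrite row_Y.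
  by rewrite sum_nat_const card_ord.
have h4 : \sum_p \sum_b (gedge f g (inr (inr p)) b : nat) = 3 * k * nleaves w.
  rewrite (eq_bigr (fun _ => 1)); last by move=> p _; rewrite row_L.
  by rewrite sum_nat_const card_prod !card_ord muln1.
rewrite /nedges big_sumType big_sumType big_sumType h1 h2 h3 h4 /=; lia.
Qed.
End Graph.

Local Open Scope ring_scope.

Lemma AL (I : finType) (x y : I -> rat) (a : rat) :
  (forall i, 0 <= x i) -> (forall i, 0 <= y i) -> \sum_i x i = a -> \sum_i y i = a ->
  \sum_i x i * y i * (3 * a - x i - y i) <= a ^+ 3.
Proof.
move=> x0 y0 sx sy.
pose p i := x i + y i.
have sp : \sum_i p i = 2 * a by rewrite big_split /= sx sy; ring.
have p0 i : 0 <= p i by rewrite /p addr_ge0.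
have a0 : 0 <= a by rewrite -sx sumr_ge0.
have ple i : p i <= 2 * a by rewrite -sp (bigD1 i) //= lerDl sumr_ge0.
pose h i := p i ^+ 2 * (3 * a - p i) / 4.
have step i : x i * y i * (3 * a - x i - y i) <= h i.
  have := ple i; have := x0 i; have := y0 i; rewrite /h /p => *.
  have : 0 <= (x i - y i) ^+ 2 * (3 * a - (x i + y i)) by apply: mulr_ge0; [apply: sqr_ge0 | lra].
  lra.
apply: (@le_trans _ _ (\sum_i h i)); first by apply: ler_sum => i _; apply: step.
case: (pickP (fun _ : I => true)) => [i0 _|I0]; last first.
  rewrite big_pred0 // -sx big_pred0 // expr0n /=; lra.
case: (@Order.TotalTheory.arg_maxP _ _ I i0 xpredT p isT) => j _ jmax.
case: (lerP (p j) a) => hj.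
  have -> : a ^+ 3 = \sum_i p i * (a ^+ 2 / 2).
    by rewrite -mulr_suml sp; field.
  apply: ler_sum => i _; rewrite /h.
  have pij : p i <= a by apply: le_trans (jmax i isT) hj.
  have := p0 i; move: pij; set u := p i => pij u0.
  have : 0 <= u * ((a - u) * (2 * a - u)) by apply: mulr_ge0 => //; apply: mulr_ge0; lra.
  nra.
set q := 2 * a - p j.
have sq : \sum_(i | i != j) p i = q by rewrite /q -sp [X in _ = X - _](bigD1 j) //=; lra.
have piq i : i != j -> p i <= q.
  by move=> ij; rewrite -sq (bigD1 i) //= lerDl sumr_ge0.
rewrite (bigD1 j) //=.
have hq : \sum_(i | i != j) h i <= \sum_(i | i != j) p i * (q * (3 * a - q) / 4).
  apply: ler_sum => i ij; rewrite /h.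
  have := piq i ij; have := p0 i; set u := p i => u0 uq.
  have q0 : q <= a by rewrite /q; lra.
  have : 0 <= u * ((q - u) * (3 * a - q - u)) by apply: mulr_ge0 => //; apply: mulr_ge0; lra.
  nra.
rewrite -mulr_suml sq in hq.
have : h j + q * (q * (3 * a - q) / 4) = a ^+ 3 by rewrite /h /q; field.
lra.
Qed.

Lemma sum_eqG (T : finType) (x : T) (G : T -> rat) :
  \sum_X ((x == X)%:R * G X) = G x.
Proof.
rewrite (bigD1 x) //= eqxx mul1r big1 ?addr0 // => X /negbTE.
by rewrite eq_sym => ->; rewrite mul0r.
Qed.

Section CL.
Variables (T : finType) (n : nat) (U V : 'I_n -> T).

Definition Nf (X : T) : rat := \sum_i \sum_j ((U i == V j) && (U i == X))%:R.

Lemma CL : 3 * n%:R * (\sum_i \sum_j ((U i == V j)%:R : rat))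
   <= n%:R ^+ 3 + \sum_i Nf (U i) + \sum_j Nf (V j).
Proof.
pose rho X : rat := \sum_i (U i == X)%:R.
pose beta X : rat := \sum_j (V j == X)%:R.
have fibU G : \sum_i G (U i) = \sum_X rho X * G X.
  rewrite [RHS](eq_bigr (fun X => \sum_i (U i == X)%:R * G X)); last first.
    by move=> X _; rewrite /rho mulr_suml.
  rewrite exchange_big /=; apply: eq_bigr => i _; by rewrite sum_eqG.
have fibV G : \sum_j G (V j) = \sum_X beta X * G X.
  rewrite [RHS](eq_bigr (fun X => \sum_i (V i == X)%:R * G X)); last first.
    by move=> X _; rewrite /beta mulr_suml.
  rewrite exchange_big /=; apply: eq_bigr => i _; by rewrite sum_eqG.
have NfE X : Nf X = rho X * beta X.
  rewrite /Nf /rho /beta mulr_suml; apply: eq_bigr => i _.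
  rewrite mulr_sumr; apply: eq_bigr => j _.
  case: (U i =P X) => [->|h1]; case: (V j =P X) => [->|h2] /=;
    rewrite ?eqxx ?mul1r ?mul0r ?mulr0 ?andbF ?andbT //.
  by case: eqP => // e; rewrite e in h2.
have Ntot : \sum_i \sum_j ((U i == V j)%:R : rat) = \sum_X rho X * beta X.
  rewrite [RHS](eq_bigr (fun X => Nf X)); last by move=> X _; rewrite NfE.
  rewrite /Nf [RHS]exchange_big /=; apply: eq_bigr => i _.
  rewrite [RHS]exchange_big /=; apply: eq_bigr => j _.
  rewrite -(sum_eqG (U i) (fun X => (U i == V j)%:R)).
  by apply: eq_bigr => X _; case: (U i == V j); case: (U i == X).
have srho : \sum_X rho X = n%:R.
  have := fibU (fun _ => 1); rewrite sumr_const card_ord /= => ->.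
  by apply: eq_bigr => X _; rewrite mulr1.
have sbeta : \sum_X beta X = n%:R.
  have := fibV (fun _ => 1); rewrite sumr_const card_ord /= => ->.
  by apply: eq_bigr => X _; rewrite mulr1.
have := AL (fun X => sumr_ge0 _ (fun i _ => ler0n _ _)) (fun X => sumr_ge0 _ (fun i _ => ler0n _ _)) srho sbeta.
rewrite Ntot fibU fibV.
have -> : \sum_X rho X * beta X * (3 * n%:R - rho X - beta X)
   = 3 * n%:R * \sum_X rho X * beta X - \sum_X rho X * Nf X - \sum_X beta X * Nf X.
  rewrite mulr_sumr -!sumrB; apply: eq_bigr => X _; rewrite NfE; ring.
lra.
Qed.
End CL.

Lemma sum_blocks (T : finType) (P : {set {set T}}) (x y : T) :
  partition P setT ->
  \sum_(C in P) (((x \in C) && (y \in C))%:R : rat) = ((pblock P x == pblock P y)%:R).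
Proof.
move=> /and3P [/eqP cov triv _].
have xc : x \in cover P by rewrite cov inE.
rewrite (bigD1 (pblock P x)) ?pblock_mem //= mem_pblock xc /= big1 ?addr0.
  by rewrite eq_pblock.
move=> C /andP [CP Cne]; case xC: (x \in C) => //=.
by rewrite (def_pblock triv CP xC) eqxx in Cne.
Qed.

Lemma preim_same (T : finType) (rT : eqType) (l : T -> rT) (x y : T) :
  (pblock (preim_partition l setT) x == pblock (preim_partition l setT) y) = (l x == l y).
Proof.
have /and3P [/eqP cov triv _] := preim_partitionP l setT.
rewrite eq_pblock //; last by rewrite cov inE.
rewrite /preim_partition pblock_equivalence_partition ?inE //.
move=> a b c _ _ _; split=> [//|/eqP ->]; by rewrite eq_sym.
Qed.


Section Main.
Variables (k : nat) (w : 'I_(3 * k) -> nat) (f g : 'I_k -> 'I_(tot w) -> 'I_(3 * k)).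

Local Notation m := (nedges f g).
Local Notation RV := (redV w).
Local Notation BV := (blueV w).

Definition W (r : RV) (b : BV) : rat :=
  (m * gedge f g r b)%:R - (deg_red f g r * deg_blue f g b)%:R.

Lemma blockE (C : {set vertex w}) : (0 < m)%N ->
  ((edges_in f g C)%:R / m%:R - (red_deg_sum f g C * blue_deg_sum f g C)%:R / (m ^ 2)%:R : rat)
  = (m ^ 2)%:R^-1 * \sum_(r : RV) \sum_(b : BV) ((inl r \in C) && (inr b \in C))%:R * W r b.
Proof.
move=> m0.
have -> : (\sum_(r : RV) \sum_(b : BV) ((inl r \in C) && (inr b \in C))%:R * W r b)
   = m%:R * (edges_in f g C)%:R - (red_deg_sum f g C)%:R * (blue_deg_sum f g C)%:R.
  rewrite /W; generalize (nedges f g) => M.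
  rewrite /edges_in /red_deg_sum /blue_deg_sum !natr_sum mulr_sumr.
  rewrite [X in _ * X]big_mkcond /= mulr_suml [X in _ - X]big_mkcond /= -sumrB.
  apply: eq_bigr => r _.
  rewrite natr_sum.
  case: (inl r \in C) => /=.
    rewrite !mulr_sumr -sumrB; apply: eq_bigr => b _.
    case: (inr b \in C); rewrite /= ?mul0r ?mulr0 ?subr0 //;
      rewrite ?mul1r ?natrM; ring.
  rewrite subr0 big1 ?mulr0 ?big1 ?mulr0 // => b _; by rewrite mul0r.
have mne : (m%:R : rat) != 0 by rewrite pnatr_eq0 -lt0n.
rewrite natrX; field; exact: mne.
Qed.

Lemma QbE (P : {set {set vertex w}}) : partition P setT -> (0 < m)%N ->
  Qb f g P = (m ^ 2)%:R^-1 * \sum_(r : RV) \sum_(b : BV)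
     ((pblock P (inl r) == pblock P (inr b))%:R * W r b).
Proof.
move=> pP m0; rewrite /Qb (eq_bigr _ (fun C _ => blockE C m0)) -mulr_sumr; congr (_ * _).
rewrite exchange_big /=; apply: eq_bigr => r _.
rewrite exchange_big /=; apply: eq_bigr => b _.
by rewrite -mulr_suml sum_blocks.
Qed.

Lemma sum_pairR (A B : finType) (G : A * B -> rat) :
  \sum_p G p = \sum_a \sum_b G (a, b).
Proof. by rewrite pair_bigA; apply: eq_bigr => [[a b]]. Qed.

Variable t : 'I_k.
Local Notation a := (tot w).

Definition rK (j : 'I_a) : RV := inl (inl (t, j)).
Definition bK (j : 'I_a) : BV := inl (inl (t, j)).

Lemma rK_in j : (inl (rK j) : vertex w) \in biclique w t.
Proof. by rewrite inE /= eqxx. Qed.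
Lemma bK_in j : (inr (bK j) : vertex w) \in biclique w t.
Proof. by rewrite inE /= eqxx. Qed.

Lemma split_red (F : RV -> rat) : \sum_r F r =
  \sum_j F (rK j) + \sum_r (if inl r \in biclique w t then 0 else F r).
Proof.
have -> : \sum_r F r = \sum_r ((if inl r \in biclique w t then F r else 0)
                 + (if inl r \in biclique w t then 0 else F r)).
  by apply: eq_bigr => r _; case: ifP; rewrite ?addr0 ?add0r.
rewrite big_split /=; congr (_ + _).
rewrite big_sumType big_sumType /=.
rewrite [X in _ + X + _]big1; last by move=> i _; rewrite inE.
rewrite [X in _ + _ + X]big1 ?addr0; last by move=> i _; rewrite inE.
rewrite ?addr0 sum_pairR (bigD1 t) //= [X in _ + X]big1 ?addr0.
  by apply: eq_bigr => j _; rewrite inE /= eqxx.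
by move=> t' /negbTE tt; apply: big1 => j _; rewrite inE /= tt.
Qed.

Lemma split_blue (F : BV -> rat) : \sum_b F b =
  \sum_j F (bK j) + \sum_b (if inr b \in biclique w t then 0 else F b).
Proof.
have -> : \sum_b F b = \sum_b ((if inr b \in biclique w t then F b else 0)
                 + (if inr b \in biclique w t then 0 else F b)).
  by apply: eq_bigr => r _; case: ifP; rewrite ?addr0 ?add0r.
rewrite big_split /=; congr (_ + _).
rewrite big_sumType big_sumType /=.
rewrite [X in _ + X + _]big1; last by move=> i _; rewrite inE.
rewrite [X in _ + _ + X]big1 ?addr0; last by move=> i _; rewrite inE.
rewrite ?addr0 sum_pairR (bigD1 t) //= [X in _ + X]big1 ?addr0.
  by apply: eq_bigr => j _; rewrite inE /= eqxx.
by move=> t' /negbTE tt; apply: big1 => j _; rewrite inE /= tt.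
Qed.

Variable P : {set {set vertex w}}.
Hypothesis pP : partition P setT.

Definition Cb (v : vertex w) := pblock P v.
Definition U (i : 'I_a) := Cb (inl (rK i)).
Definition V (j : 'I_a) := Cb (inr (bK j)).
Definition lam (i j : 'I_a) (v : vertex w) : option {set vertex w} :=
  if v \in biclique w t then (if U i == V j then Some (U i) else None) else Some (Cb v).
Definition Delta (r : RV) (b : BV) : rat :=
  \sum_i \sum_j ((lam i j (inl r) == lam i j (inr b))%:R - (Cb (inl r) == Cb (inr b))%:R).
Local Notation NF := (Nf U V).

Lemma sum_const2 (c : rat) : \sum_(i < a) \sum_(j < a) c = a%:R ^+ 2 * c.
Proof.
rewrite sumr_const card_ord sumr_const card_ord -mulrnA.
by rewrite -natrX mulr_natl expnS expn1.
Qed.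

Lemma D1 i' j' : Delta (rK i') (bK j') = a%:R ^+ 2 * (1 - (U i' == V j')%:R).
Proof.
rewrite /Delta -sum_const2; apply: eq_bigr => i _; apply: eq_bigr => j _.
by rewrite /lam rK_in bK_in eqxx.
Qed.

Lemma D2 i' b : inr b \notin biclique w t ->
  Delta (rK i') b = NF (Cb (inr b)) - a%:R ^+ 2 * (U i' == Cb (inr b))%:R.
Proof.
move=> nb; rewrite /Delta -sum_const2 /Nf -!sumrB; apply: eq_bigr => i _.
rewrite -sumrB; apply: eq_bigr => j _.
rewrite /lam rK_in (negbTE nb); case: (U i == V j) => //=.
Qed.

Lemma D3 r j' : inl r \notin biclique w t ->
  Delta r (bK j') = NF (Cb (inl r)) - a%:R ^+ 2 * (Cb (inl r) == V j')%:R.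
Proof.
move=> nr; rewrite /Delta -sum_const2 /Nf -!sumrB; apply: eq_bigr => i _.
rewrite -sumrB; apply: eq_bigr => j _.
rewrite /lam bK_in (negbTE nr); case: (U i == V j) => //=.
by rewrite eq_sym.
Qed.

Lemma D4 r b : inl r \notin biclique w t -> inr b \notin biclique w t -> Delta r b = 0.
Proof.
move=> nr nb; rewrite /Delta big1 // => i _; rewrite big1 // => j _.
by rewrite /lam (negbTE nr) (negbTE nb) /= subrr.
Qed.

Lemma W1 i j : W (rK i) (bK j) = m%:R - (a.+1 ^ 2)%:R.
Proof. by rewrite /W deg_redK deg_blueK /= eqxx muln1 expnS expn1. Qed.

Lemma W2 i b : W (rK i) b = (m * gedge f g (rK i) b)%:R - (a.+1 * deg_blue f g b)%:R.
Proof. by rewrite /W deg_redK. Qed.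

Lemma W3 r j : W r (bK j) = (m * gedge f g r (bK j))%:R - (deg_red f g r * a.+1)%:R.
Proof. by rewrite /W deg_blueK. Qed.

Lemma G1 i : \sum_b (if inr b \in biclique w t then 0 else ((gedge f g (rK i) b)%:R : rat)) = 1.
Proof.
have := row_K f g t i; move/(congr1 (fun n : nat => (n%:R : rat))).
rewrite natr_sum split_blue.
rewrite (eq_bigr (fun _ => 1)); last by move=> j _; rewrite /= eqxx.
rewrite sumr_const card_ord => h; apply: (@addrI _ a%:R).
by rewrite /rK h natr1.
Qed.

Lemma G2 j : \sum_r (if inl r \in biclique w t then 0 else ((gedge f g r (bK j))%:R : rat)) = 1.
Proof.
have := deg_blueK f g t j; rewrite /deg_blue card_setE.
move/(congr1 (fun n : nat => (n%:R : rat))).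
rewrite natr_sum split_red.
rewrite (eq_bigr (fun _ => 1)); last by move=> i _; rewrite /= eqxx.
rewrite sumr_const card_ord => h; apply: (@addrI _ a%:R).
by rewrite /bK h natr1.
Qed.

Lemma bool_le1 (b : bool) : (b%:R : rat) <= 1.
Proof. by case: b. Qed.

Lemma sum_constR (c : rat) : \sum_(j < a) c = a%:R * c.
Proof. by rewrite sumr_const card_ord mulr_natl. Qed.

Lemma NF0 X : 0 <= NF X.
Proof. by apply: sumr_ge0 => i _; apply: sumr_ge0 => j _; apply: ler0n. Qed.

Lemma NFle X : NF X <= a%:R ^+ 2.
Proof.
rewrite -[_ ^+ 2]mulr1 -sum_const2; apply: ler_sum => i _; apply: ler_sum => j _.
exact: bool_le1.
Qed.

Lemma NFrho X : NF X <= a%:R * \sum_i (U i == X)%:R.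
Proof.
rewrite mulr_sumr; apply: ler_sum => i _.
rewrite -sum_constR; apply: ler_sum => j _.
by case: (U i == X); rewrite ?andbF ?andbT //; apply: bool_le1.
Qed.

Lemma NFbeta X : NF X <= a%:R * \sum_j (V j == X)%:R.
Proof.
rewrite /Nf exchange_big /= mulr_sumr; apply: ler_sum => j _.
rewrite -sum_constR; apply: ler_sum => i _.
case: (V j =P X) => [->|h] /=; first by case: (_ && _).
case: (U i =P V j) => [e|] //=; case: (U i =P X) => [e'|] //=.
by rewrite -e -e' in h.
Qed.

Lemma Bbound :
  \sum_i \sum_b (if inr b \in biclique w t then 0 else Delta (rK i) b * W (rK i) b)
  >= - (m%:R * \sum_i (a%:R ^+ 2 - NF (U i))).
Proof.
pose XX i b : rat := if inr b \in biclique w t then 0 else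
   (NF (Cb (inr b)) - a%:R ^+ 2 * (U i == Cb (inr b))%:R) * (m * gedge f g (rK i) b)%:R.
pose YY i b : rat := if inr b \in biclique w t then 0 else
   (NF (Cb (inr b)) - a%:R ^+ 2 * (U i == Cb (inr b))%:R) * (a.+1 * deg_blue f g b)%:R.
have -> : \sum_i \sum_b (if inr b \in biclique w t then 0 else Delta (rK i) b * W (rK i) b)
   = \sum_i \sum_b XX i b - \sum_b \sum_i YY i b.
  rewrite [X in _ - X]exchange_big -sumrB; apply: eq_bigr => i _.
  rewrite -sumrB; apply: eq_bigr => b _; rewrite /XX /YY.
  case: ifPn => nb; first by rewrite subr0.
  by rewrite D2 // W2 mulrBr.
have Y0 : \sum_b \sum_i YY i b <= 0.
  apply: sumr_le0 => b _; rewrite /YY; case nb: (inr b \in biclique w t).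
    by rewrite big1.
  rewrite -mulr_suml; apply: mulr_le0_ge0; last exact: ler0n.
  rewrite sumrB sumr_const card_ord -mulr_sumr.
  have := NFrho (Cb (inr b)); have := ler0n rat a.
  set N := NF _; set rh := \sum_i _.
  rewrite -mulr_natr expr2 => a0 h.
  have : 0 <= a%:R * (a%:R * rh - N) by apply: mulr_ge0 => //; lra.
  nra.
have Xb : \sum_i \sum_b XX i b >= - (m%:R * \sum_i (a%:R ^+ 2 - NF (U i))).
  rewrite big_distrr /= -sumrN; apply: ler_sum => i _.
  set c := - (m%:R * (a%:R ^+ 2 - NF (U i))).
  have E1 : \sum_b (if inr b \in biclique w t then 0 else c * (gedge f g (rK i) b)%:R)
            = c * \sum_b (if inr b \in biclique w t then 0 else ((gedge f g (rK i) b)%:R : rat)).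
    by rewrite mulr_sumr; apply: eq_bigr => b _; case: ifP; rewrite ?mulr0.
  rewrite G1 mulr1 in E1; rewrite -E1; apply: ler_sum => b _.
  rewrite /XX /c; case: ifPn => nb; first by [].
  rewrite natrM.
  have g0 : (0 : rat) <= (gedge f g (rK i) b)%:R by apply: ler0n.
  have m0 : (0 : rat) <= m%:R by apply: ler0n.
  have hN := NFle (U i); have hN0 := NF0 (Cb (inr b)).
  case: (U i =P Cb (inr b)) => [->|_] /=.
    rewrite mulr1 [X in _ <= X](_ : _ = - (m%:R * (a%:R ^+ 2 - NF (Cb (inr b)))) * (gedge f g (rK i) b)%:R) //; ring.
  rewrite mulr0 subr0.
  have : 0 <= (a%:R ^+ 2 - NF (U i)) * (m%:R * (gedge f g (rK i) b)%:R).
    by apply: mulr_ge0; [lra | apply: mulr_ge0].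
  have : 0 <= NF (Cb (inr b)) * (m%:R * (gedge f g (rK i) b)%:R).
    by apply: mulr_ge0 => //; apply: mulr_ge0.
  lra.
lra.
Qed.

Lemma Cbound :
  \sum_r (if inl r \in biclique w t then 0 else \sum_j Delta r (bK j) * W r (bK j))
  >= - (m%:R * \sum_j (a%:R ^+ 2 - NF (V j))).
Proof.
have -> : \sum_r (if inl r \in biclique w t then 0 else \sum_j Delta r (bK j) * W r (bK j))
   = \sum_j \sum_r (if inl r \in biclique w t then 0 else Delta r (bK j) * W r (bK j)).
  rewrite exchange_big /=; apply: eq_bigr => r _; case: ifP => // _.
  by rewrite big1.
pose XX j r : rat := if inl r \in biclique w t then 0 else
   (NF (Cb (inl r)) - a%:R ^+ 2 * (Cb (inl r) == V j)%:R) * (m * gedge f g r (bK j))%:R.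
pose YY j r : rat := if inl r \in biclique w t then 0 else
   (NF (Cb (inl r)) - a%:R ^+ 2 * (Cb (inl r) == V j)%:R) * (deg_red f g r * a.+1)%:R.
have -> : \sum_j \sum_r (if inl r \in biclique w t then 0 else Delta r (bK j) * W r (bK j))
   = \sum_j \sum_r XX j r - \sum_r \sum_j YY j r.
  rewrite [X in _ - X]exchange_big -sumrB; apply: eq_bigr => j _.
  rewrite -sumrB; apply: eq_bigr => r _; rewrite /XX /YY.
  case: ifPn => nr; first by rewrite subr0.
  by rewrite D3 // W3 mulrBr.
have Y0 : \sum_r \sum_j YY j r <= 0.
  apply: sumr_le0 => r _; rewrite /YY; case nr: (inl r \in biclique w t).
    by rewrite big1.
  rewrite -mulr_suml; apply: mulr_le0_ge0; last exact: ler0n.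
  rewrite sumrB sumr_const card_ord -mulr_sumr.
  under eq_bigr do rewrite eq_sym.
  have := NFbeta (Cb (inl r)); have := ler0n rat a.
  set N := NF _; set rh := \sum_i _.
  rewrite -mulr_natr expr2 => a0 h.
  have : 0 <= a%:R * (a%:R * rh - N) by apply: mulr_ge0 => //; lra.
  nra.
have Xb : \sum_j \sum_r XX j r >= - (m%:R * \sum_j (a%:R ^+ 2 - NF (V j))).
  rewrite big_distrr /= -sumrN; apply: ler_sum => j _.
  set c := - (m%:R * (a%:R ^+ 2 - NF (V j))).
  have E1 : \sum_r (if inl r \in biclique w t then 0 else c * (gedge f g r (bK j))%:R)
            = c * \sum_r (if inl r \in biclique w t then 0 else ((gedge f g r (bK j))%:R : rat)).
    by rewrite mulr_sumr; apply: eq_bigr => r _; case: ifP; rewrite ?mulr0.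
  rewrite G2 mulr1 in E1; rewrite -E1; apply: ler_sum => r _.
  rewrite /XX /c; case: ifPn => nr; first by [].
  rewrite natrM.
  have g0 : (0 : rat) <= (gedge f g r (bK j))%:R by apply: ler0n.
  have m0 : (0 : rat) <= m%:R by apply: ler0n.
  have hN := NFle (V j); have hN0 := NF0 (Cb (inl r)).
  case: (Cb (inl r) =P V j) => [->|_] /=.
    rewrite mulr1 [X in _ <= X](_ : _ = - (m%:R * (a%:R ^+ 2 - NF (V j))) * (gedge f g r (bK j))%:R) //; ring.
  rewrite mulr0 subr0.
  have : 0 <= (a%:R ^+ 2 - NF (V j)) * (m%:R * (gedge f g r (bK j))%:R).
    by apply: mulr_ge0; [lra | apply: mulr_ge0].
  have : 0 <= NF (Cb (inl r)) * (m%:R * (gedge f g r (bK j))%:R).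
    by apply: mulr_ge0 => //; apply: mulr_ge0.
  lra.
lra.
Qed.

Definition Etot : rat := \sum_i \sum_j (1 - (U i == V j)%:R).

Lemma total_LB :
  \sum_r \sum_b Delta r b * W r b >=
  a%:R ^+ 2 * (m%:R - (a.+1 ^ 2)%:R) * Etot
  - m%:R * \sum_i (a%:R ^+ 2 - NF (U i)) - m%:R * \sum_j (a%:R ^+ 2 - NF (V j)).
Proof.
rewrite split_red.
have -> : \sum_j \sum_b Delta (rK j) b * W (rK j) b =
  \sum_i \sum_j Delta (rK i) (bK j) * W (rK i) (bK j)
  + \sum_i \sum_b (if inr b \in biclique w t then 0 else Delta (rK i) b * W (rK i) b).
  by rewrite -big_split /=; apply: eq_bigr => i _; rewrite split_blue.
have -> : \sum_r (if inl r \in biclique w t then 0 else \sum_b Delta r b * W r b)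
   = \sum_r (if inl r \in biclique w t then 0 else \sum_j Delta r (bK j) * W r (bK j)).
  apply: eq_bigr => r _; case: ifPn => // nr.
  rewrite split_blue [X in _ + X]big1 ?addr0 // => b _; case: ifPn => // nb.
  by rewrite D4 // mul0r.
have -> : \sum_i \sum_j Delta (rK i) (bK j) * W (rK i) (bK j)
   = a%:R ^+ 2 * (m%:R - (a.+1 ^ 2)%:R) * Etot.
  rewrite /Etot mulr_sumr; apply: eq_bigr => i _.
  rewrite mulr_sumr; apply: eq_bigr => j _.
  by rewrite D1 W1; ring.
have := Bbound; have := Cbound; lra.
Qed.

Definition Pij (i j : 'I_a) := preim_partition (lam i j) setT.

Lemma sum_diff : (0 < m)%N ->
  \sum_i \sum_j (Qb f g (Pij i j) - Qb f g P)
  = (m ^ 2)%:R^-1 * \sum_r \sum_b Delta r b * W r b.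
Proof.
move=> m0.
have QP := QbE pP m0.
have Qij i j : Qb f g (Pij i j) = (m ^ 2)%:R^-1 * \sum_r \sum_b
    ((lam i j (inl r) == lam i j (inr b))%:R * W r b).
  rewrite QbE ?preim_partitionP //; congr (_ * _).
  by apply: eq_bigr => r _; apply: eq_bigr => b _; rewrite /Pij preim_same.
rewrite (eq_bigr (fun i => \sum_j (m ^ 2)%:R^-1 * \sum_r \sum_b
    (((lam i j (inl r) == lam i j (inr b))%:R - (Cb (inl r) == Cb (inr b))%:R) * W r b)));
  last first.
  move=> i _; apply: eq_bigr => j _; rewrite Qij QP -mulrBr; congr (_ * _).
  rewrite -sumrB; apply: eq_bigr => r _; rewrite -sumrB; apply: eq_bigr => b _.
  by rewrite mulrBl.
under eq_bigr do rewrite -mulr_sumr.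
rewrite -mulr_sumr; congr (_ * _).
under eq_bigr do rewrite exchange_big /=.
rewrite exchange_big /=; apply: eq_bigr => r _.
under eq_bigr do rewrite exchange_big /=.
rewrite exchange_big /=; apply: eq_bigr => b _.
rewrite /Delta mulr_suml; apply: eq_bigr => i _.
by rewrite mulr_suml.
Qed.

Lemma main_sec : three_partition w -> (7 %| a ^ 2)%N -> valid_assign f ->
  (forall P', partition P' [set: vertex w] -> Qb f g P' <= Qb f g P) ->
  exists2 C, C \in P & biclique w t \subset C.
Proof.
move=> [bb [_ hw]] d7 vf opt.
have k0 : (0 < k)%N by case: t => tt /=; case: k => //.
have a0 : (0 < a)%N.
  have i0 : 'I_(3 * k) by exists 0%N; rewrite muln_gt0.
  rewrite /tot (bigD1 i0) //=; have := (hw i0).1; lia.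
have a7 : (7 <= a)%N.
  apply: dvdn_leq => //; move: d7; rewrite expnS expn1 Euclid_dvdM //.
  by case/orP.
have nl : (7 * nleaves w = a ^ 2)%N by rewrite /nleaves mulnC divnK.
have mE := nedgesE g vf.
have m0 : (0 < m)%N by rewrite mE; nia.
have key : (a * a.+1 ^ 2 < (a - 3) * m)%N.
  have h7 : (7 * m = k * (13 * a ^ 2 + 14 * a + 63))%N by rewrite mE; nia.
  have : (7 * (a * a.+1 ^ 2) < 7 * ((a - 3) * m))%N.
    rewrite [X in (_ < X)%N]mulnCA h7.
    have h1 : (13 * a ^ 2 + 14 * a + 63 <= k * (13 * a ^ 2 + 14 * a + 63))%N.
      by rewrite leq_pmull.
    apply: (@leq_trans ((a - 3) * (13 * a ^ 2 + 14 * a + 63))); last exact: leq_mul.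
    have [c ->] : exists c, a = (c + 7)%N by exists (a - 7)%N; rewrite subnK.
    have -> : (c + 7 - 3 = c + 4)%N by lia.
    nia.
  by rewrite ltn_pmul2l.
have cov : cover P = setT by case/and3P: pP => /eqP.
case: (boolP [exists C in P, biclique w t \subset C]) => [/existsP [C /andP [CP sub]] | hno].
  by exists C.
exfalso.
have [i0 [j0 hij]] : exists i j, U i != V j.
  case: (boolP [exists i, [exists j, U i != V j]]) => [/existsP [i /existsP [j hij]]|hall].
    by exists i, j.
  have allEq : forall i j, U i = V j.
    move=> i j; apply/eqP; apply: contraNT hall => h; apply/existsP; exists i.
    by apply/existsP; exists j.
  pose z : 'I_a := Ordinal a0.
  exfalso; apply: (negP hno); apply/existsP; exists (U z).
  rewrite pblock_mem ?cov ?inE //=.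
  apply/subsetP => v; rewrite inE.
  case: v => [[[[t' j]|i]|i]|[[[t' j]|i]|i]] //= /eqP tt; subst t'.
    have -> : U z = U j by rewrite (allEq z z) (allEq j z).
    by rewrite /U /Cb mem_pblock cov inE.
  rewrite (allEq z j) /V /Cb mem_pblock cov inE //.
have E1 : 1 <= Etot.
  rewrite /Etot (bigD1 i0) //= (bigD1 j0) //= (negbTE hij) subr0.
  have : 0 <= \sum_(j | j != j0) (1 - (U i0 == V j)%:R : rat).
    by apply: sumr_ge0 => j _; rewrite subr_ge0 bool_le1.
  have : 0 <= \sum_(i | i != i0) \sum_j (1 - (U i == V j)%:R : rat).
    by apply: sumr_ge0 => i _; apply: sumr_ge0 => j _; rewrite subr_ge0 bool_le1.
  lra.
have S0 : \sum_r \sum_b Delta r b * W r b <= 0.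
  have := sum_diff m0.
  have : \sum_i \sum_j (Qb f g (Pij i j) - Qb f g P) <= 0.
    apply: sumr_le0 => i _; apply: sumr_le0 => j _; rewrite subr_le0.
    by apply: opt; apply: preim_partitionP.
  move=> h1 h2; rewrite h2 in h1.
  have mp : (0 : rat) < (m ^ 2)%:R by rewrite ltr0n expn_gt0 m0.
  by rewrite pmulr_rle0 ?invr_gt0 // in h1.
have LB := total_LB.
have cl := CL U V.
have NE : \sum_i \sum_j ((U i == V j)%:R : rat) = a%:R ^+ 2 - Etot.
  rewrite /Etot -[a%:R ^+ 2]mulr1 -sum_const2 -!sumrB; apply: eq_bigr => i _.
  by rewrite -sumrB; apply: eq_bigr => j _; rewrite opprB addrC subrK.
rewrite NE in cl.
rewrite !sumrB !sum_constR in LB.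
have keyR : (a%:R * (a.+1 ^ 2)%:R < (a - 3)%:R * m%:R :> rat).
  by rewrite -!natrM ltr_nat.
rewrite natrB in keyR; last by lia.
have hA : (7 : rat) <= a%:R by rewrite ler_nat.
have hsq : ((a.+1 ^ 2)%:R : rat) = (a%:R + 1) ^+ 2 by rewrite natrX natr1.
rewrite hsq in keyR LB.
set A := a%:R in LB cl keyR hA NE.
set M := m%:R in LB keyR S0.
set E := Etot in LB cl E1 NE.
set SU := \sum_i NF (U i) in LB cl.
set SV := \sum_j NF (V j) in LB cl.
have M0 : 0 <= M by rewrite /M ler0n.
have c1 : M * (3 * A * (A ^+ 2 - E)) <= M * (A ^+ 3 + SU + SV).
  by apply: ler_wpM2l.
have c2 : 0 < A * E * ((A - 3) * M - A * (A + 1) ^+ 2).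
  apply: mulr_gt0; first by apply: mulr_gt0; lra.
  lra.
clear -LB cl c1 c2 S0.
nra.
Qed.
End Main.

Local Close Scope ring_scope.

Theorem lemma1 (k : nat) (w : 'I_(3 * k) -> nat)
    (f g : 'I_k -> 'I_(tot w) -> 'I_(3 * k)) (P : {set {set vertex w}}) :
  three_partition w ->
  7 %| (tot w) ^ 2 ->
  valid_assign f -> valid_assign g ->
  partition P [set: vertex w] ->
  (forall P' : {set {set vertex w}}, partition P' [set: vertex w] ->
     (Qb f g P' <= Qb f g P)%R) ->
  forall t : 'I_k, exists2 C, C \in P & biclique w t \subset C.
Proof.
move=> tp d7 vf vg pP opt t.
exact: (@main_sec k w f g t P pP tp d7 vf opt).
Qed.
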